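(* Let $G=(V,E)$ be a finite simple graph which is $S_{1,1,5}$-free, $K_4$-free, diamond-free and butterfly-free. Let $xy\in E$ and let $r$ be a vertex with $rx\in E$ and $ry\notin E$. For $i\ge 1$ let $N_i=\{z\in V:\operatorname{dist}_G(z,\{x,y\})=i\}$. Assume $N_2=\{u_1,\dots,u_k\}$ is an independent set, and for each $i$ let $T_i$ be the set of vertices $t\in N_3$ whose only neighbor in $N_2$ is $u_i$. If $|N_2|\ge 5$, then there is no induced path $(u_i,t_i,z_1,z_2,z_3)$ with $t_i\in T_i$, $z_1\in N_4$, $z_2\in N_4\cup N_5$ and $z_3\in N_4\cup N_5\cup N_6$.
   Context: $S_{1,1,5}$ is the tree with a center $u$ adjacent to $a$, $b$ and $z_1$, where $u,z_1,\dots,z_5$ is an induced path, and no other edges. A diamond is $K_4$ minus one edge; a butterfly consists of two disjoint edges (inducing $2K_2$) together with a vertex adjacent to all four of their endpoints. $\operatorname{dist}_G(z,\{x,y\})$ is the minimum of the distances from $z$ to $x$ and to $y$. *)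

(* Defs.v *)
From mathcomp Require Import all_boot.
Set Implicit Arguments. Unset Strict Implicit. Unset Printing Implicit Defensive.

Definition simple_graph (T : finType) (e : rel T) : Prop :=
  symmetric e /\ irreflexive e.

Definition mk_graph (n : nat) (l : seq (nat * nat)) : rel 'I_n :=
  fun i j => ((nat_of_ord i, nat_of_ord j) \in l) || ((nat_of_ord j, nat_of_ord i) \in l).

Definition induced_sub (T : finType) (e : rel T) (n : nat) (h : rel 'I_n) : Prop :=
  exists f : 'I_n -> T, injective f /\ forall i j, e (f i) (f j) = h i j.

Definition H_free (T : finType) (e : rel T) (n : nat) (h : rel 'I_n) : Prop :=
  ~ induced_sub e h.

(* S_{1,1,5}: 0 = u (center), 1 = a, 2 = b, 3..7 = z1..z5. *)
Definition S115 : rel 'I_8 :=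
  mk_graph [:: (0,1); (0,2); (0,3); (3,4); (4,5); (5,6); (6,7)].
Definition K4 : rel 'I_4 :=
  mk_graph [:: (0,1); (0,2); (0,3); (1,2); (1,3); (2,3)].
Definition diamond : rel 'I_4 :=
  mk_graph [:: (0,1); (0,2); (0,3); (1,2); (1,3)].
Definition butterfly : rel 'I_5 :=
  mk_graph [:: (0,1); (2,3); (4,0); (4,1); (4,2); (4,3)].

Definition walk_len (T : finType) (e : rel T) (A : pred T) (i : nat) (z : T) : Prop :=
  exists a, A a /\ exists s : seq T, [/\ path e a s, size s = i & last a s = z].

Definition dist_set (T : finType) (e : rel T) (A : pred T) (z : T) (i : nat) : Prop :=
  walk_len e A i z /\ forall j, j < i -> ~ walk_len e A j z.

Definition induced_path (T : finType) (e : rel T) (s : seq T) : Prop :=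
  uniq s /\
  forall x0 i j, i < size s -> j < size s ->
    e (nth x0 s i) (nth x0 s j) = (i.+1 == j) || (j.+1 == i).

(* Main.v *)
Require Import Defs.
From mathcomp Require Import all_boot.
From mathcomp Require Import zify.
Set Implicit Arguments. Unset Strict Implicit. Unset Printing Implicit Defensive.

Section Main.
Variables (T : finType) (e : rel T) (A : pred T).
Hypothesis Hsym : symmetric e.
Hypothesis Hirr : irreflexive e.
Hypothesis HS : H_free e S115.
Hypothesis HK : H_free e K4.
Hypothesis HD : H_free e diamond.
Hypothesis HB : H_free e butterfly.

Ltac pat_solve := match goal with
  | |- _ = ?b => let b' := eval vm_compute in b in change b with b'
  end; match goal with
  | |- e ?a ?a = _ => by rewrite Hirr
  | |- _ = true => first [done | by rewrite Hsym]
  | |- _ = false => apply/negbTE; first [done | by rewrite Hsym]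
  end.

Lemma S115_no c a b l1 l2 l3 l4 l5 :
  e c a ->
  e c b ->
  e c l1 ->
  ~~ e c l2 ->
  ~~ e c l3 ->
  ~~ e c l4 ->
  ~~ e c l5 ->
  ~~ e a b ->
  ~~ e a l1 ->
  ~~ e a l2 ->
  ~~ e a l3 ->
  ~~ e a l4 ->
  ~~ e a l5 ->
  ~~ e b l1 ->
  ~~ e b l2 ->
  ~~ e b l3 ->
  ~~ e b l4 ->
  ~~ e b l5 ->
  e l1 l2 ->
  ~~ e l1 l3 ->
  ~~ e l1 l4 ->
  ~~ e l1 l5 ->
  e l2 l3 ->
  ~~ e l2 l4 ->
  ~~ e l2 l5 ->
  e l3 l4 ->
  ~~ e l3 l5 ->
  e l4 l5 ->
  c != a ->
  c != b ->
  c != l1 ->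
  c != l2 ->
  c != l3 ->
  c != l4 ->
  c != l5 ->
  a != b ->
  a != l1 ->
  a != l2 ->
  a != l3 ->
  a != l4 ->
  a != l5 ->
  b != l1 ->
  b != l2 ->
  b != l3 ->
  b != l4 ->
  b != l5 ->
  l1 != l2 ->
  l1 != l3 ->
  l1 != l4 ->
  l1 != l5 ->
  l2 != l3 ->
  l2 != l4 ->
  l2 != l5 ->
  l3 != l4 ->
  l3 != l5 ->
  l4 != l5 -> False.
Proof.
move=> ? ? ? ? ? ? ? ? ? ? ? ? ? ? ? ? ? ? ? ? ? ? ? ? ? ? ? ? ? ? ? ? ? ? ? ? ? ? ? ? ? ? ? ? ? ? ? ? ? ? ? ? ? ? ? ?.
apply: HS; exists (fun i : 'I_8 => nth c [:: c; a; b; l1; l2; l3; l4; l5] i); split.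
  move=> i j /eqP; rewrite (nth_uniq c) ?size_tuple //=; first by move/eqP/val_inj.
  by rewrite ?inE ?negb_or; repeat (apply/andP; split).
move=> [[|[|[|[|[|[|[|[|k]]]]]]]] Hi] //; move=> [[|[|[|[|[|[|[|[|k]]]]]]]] Hj] //.
all: rewrite /S115 /mk_graph /= ?inE ?xpair_eqE /=.
all: pat_solve.
Qed.

Lemma K4_no a b c d :
  e a b ->
  e a c ->
  e a d ->
  e b c ->
  e b d ->
  e c d ->
  a != b ->
  a != c ->
  a != d ->
  b != c ->
  b != d ->
  c != d -> False.
Proof.
move=> ? ? ? ? ? ? ? ? ? ? ? ?.
apply: HK; exists (fun i : 'I_4 => nth a [:: a; b; c; d] i); split.
  move=> i j /eqP; rewrite (nth_uniq a) ?size_tuple //=; first by move/eqP/val_inj.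
  by rewrite ?inE ?negb_or; repeat (apply/andP; split).
move=> [[|[|[|[|k]]]] Hi] //; move=> [[|[|[|[|k]]]] Hj] //.
all: rewrite /K4 /mk_graph /= ?inE ?xpair_eqE /=.
all: pat_solve.
Qed.

Lemma diamond_no a b c d :
  e a b ->
  e a c ->
  e a d ->
  e b c ->
  e b d ->
  ~~ e c d ->
  a != b ->
  a != c ->
  a != d ->
  b != c ->
  b != d ->
  c != d -> False.
Proof.
move=> ? ? ? ? ? ? ? ? ? ? ? ?.
apply: HD; exists (fun i : 'I_4 => nth a [:: a; b; c; d] i); split.
  move=> i j /eqP; rewrite (nth_uniq a) ?size_tuple //=; first by move/eqP/val_inj.
  by rewrite ?inE ?negb_or; repeat (apply/andP; split).
move=> [[|[|[|[|k]]]] Hi] //; move=> [[|[|[|[|k]]]] Hj] //.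
all: rewrite /diamond /mk_graph /= ?inE ?xpair_eqE /=.
all: pat_solve.
Qed.

Lemma butterfly_no a b c d m :
  e a b ->
  ~~ e a c ->
  ~~ e a d ->
  e a m ->
  ~~ e b c ->
  ~~ e b d ->
  e b m ->
  e c d ->
  e c m ->
  e d m ->
  a != b ->
  a != c ->
  a != d ->
  a != m ->
  b != c ->
  b != d ->
  b != m ->
  c != d ->
  c != m ->
  d != m -> False.
Proof.
move=> ? ? ? ? ? ? ? ? ? ? ? ? ? ? ? ? ? ? ? ?.
apply: HB; exists (fun i : 'I_5 => nth a [:: a; b; c; d; m] i); split.
  move=> i j /eqP; rewrite (nth_uniq a) ?size_tuple //=; first by move/eqP/val_inj.
  by rewrite ?inE ?negb_or; repeat (apply/andP; split).
move=> [[|[|[|[|[|k]]]]] Hi] //; move=> [[|[|[|[|[|k]]]]] Hj] //.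
all: rewrite /butterfly /mk_graph /= ?inE ?xpair_eqE /=.
all: pat_solve.
Qed.

Local Notation D i z := (dist_set e A z i).

Lemma wl_ext i a b : walk_len e A i a -> e a b -> walk_len e A i.+1 b.
Proof.
case=> a0 [HA [s [Hp Hs Hl]]] Hab; exists a0; split=> //; exists (rcons s b).
by rewrite rcons_path Hp Hl Hab size_rcons Hs last_rcons.
Qed.

Lemma lv_le i j a b : D i a -> D j b -> e a b -> j <= i.+1.
Proof.
move=> [Ha _] [_ Hb] Hab; rewrite leqNgt; apply/negP => Hlt.
exact: (Hb _ Hlt (wl_ext Ha Hab)).
Qed.

Lemma nadj i j a b : D i a -> D j b -> (i.+1 < j) || (j.+1 < i) -> ~~ e a b.
Proof.
move=> Ha Hb /orP[H|H]; apply/negP=> Hab.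
  by have := lv_le Ha Hb Hab; rewrite leqNgt H.
have Hba : e b a by rewrite Hsym.
by have := lv_le Hb Ha Hba; rewrite leqNgt H.
Qed.

Lemma lv_uniq i j z : D i z -> D j z -> i = j.
Proof.
move=> [Hi Hi'] [Hj Hj']; case: (ltngtP i j) => // H.
  by case: (Hj' _ H Hi).
by case: (Hi' _ H Hj).
Qed.

Lemma neq_lv i j a b : D i a -> D j b -> i != j -> a != b.
Proof.
move=> Ha Hb; apply: contra => /eqP E; subst; apply/eqP; exact: lv_uniq Ha Hb.
Qed.

Lemma lv_pred i z : D i.+1 z -> exists a, D i a /\ e a z.
Proof.
case=> [[a0 [HA [s [Hp Hs Hl]]]] Hmin].
case/lastP: s Hp Hs Hl => [|s b] Hp Hs Hl; first by [].
rewrite rcons_path in Hp; case/andP: Hp => Hp Hl'.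
rewrite last_rcons in Hl; subst b.
rewrite size_rcons in Hs; case: Hs => Hs.
exists (last a0 s); split; last by [].
split; first by exists a0; split => //; exists s.
move=> j Hj Hw; apply: (Hmin j.+1 Hj); exact: wl_ext Hw Hl'.
Qed.

Lemma lv0 a : A a -> D 0 a.
Proof.
move=> Ha; split; first by exists a; split => //; exists [::].
by move=> j; rewrite ltn0.
Qed.

Lemma lv0inv a : D 0 a -> A a.
Proof. by case=> [[a0 [HA [s [_ Hs Hl]]]] _]; case: s Hs Hl => // _ /= <-. Qed.

Definition far z := exists i, 3 < i /\ D i z.

Lemma nadjF i a b : D i a -> far b -> i < 3 -> ~~ e a b.
Proof. move=> Ha [j [Hj Hb]] Hi; apply: (nadj Ha Hb); apply/orP; left; lia. Qed.
Lemma nadjF' i a b : D i a -> far b -> i < 3 -> ~~ e b a.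
Proof. by move=> Ha Hb Hi; rewrite Hsym; apply: nadjF Ha Hb Hi. Qed.
Lemma neqF i a b : D i a -> far b -> i < 4 -> a != b.
Proof. move=> Ha [j [Hj Hb]] Hi; apply: (neq_lv Ha Hb); lia. Qed.
Lemma neqF' i a b : D i a -> far b -> i < 4 -> b != a.
Proof. by move=> Ha Hb Hi; rewrite eq_sym; apply: neqF Ha Hb Hi. Qed.

Ltac solve_fact :=
  match goal with
  | |- is_true (e ?a ?b) => first [done | by rewrite Hsym]
  | |- is_true (~~ e ?a ?b) => first [done | by rewrite Hsym |
      match goal with
      | Ha : dist_set _ _ a _, Hb : dist_set _ _ b _ |- _ => by apply: (nadj Ha Hb)
      | Ha : dist_set _ _ a _, Hb : far b |- _ => by apply: (nadjF Ha Hb)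
      | Ha : far a, Hb : dist_set _ _ b _ |- _ => by apply: (nadjF' Hb Ha)
      end]
  | |- is_true (?a != ?b) => first [done | by rewrite eq_sym |
      match goal with
      | Ha : dist_set _ _ a _, Hb : dist_set _ _ b _ |- _ => by apply: (neq_lv Ha Hb)
      | Ha : dist_set _ _ a _, Hb : far b |- _ => by apply: (neqF Ha Hb)
      | Ha : far a, Hb : dist_set _ _ b _ |- _ => by apply: (neqF' Hb Ha)
      end]
  end.

Variables (u t z1 z2 z3 : T).
Hypothesis Hu : D 2 u.
Hypothesis Ht : D 3 t.
Hypothesis HtT : forall v, D 2 v -> e t v -> v = u.
Hypothesis Hz1 : far z1.
Hypothesis Hz2 : far z2.
Hypothesis Hz3 : far z3.
Hypothesis Hut : e u t.
Hypothesis Htz1 : e t z1.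
Hypothesis Hz12 : e z1 z2.
Hypothesis Hz23 : e z2 z3.
Hypothesis Htz2 : ~~ e t z2.
Hypothesis Htz3 : ~~ e t z3.
Hypothesis Hz13 : ~~ e z1 z3.
Hypothesis Hn12 : z1 != z2.
Hypothesis Hn13 : z1 != z3.
Hypothesis Hn23 : z2 != z3.
Hypothesis Hind : forall a b, D 2 a -> D 2 b -> ~~ e a b.

Lemma vt v : D 2 v -> v != u -> ~~ e v t.
Proof.
move=> Hv Hvu; apply/negP => H; move/eqP: Hvu; apply; apply: HtT Hv _; by rewrite Hsym.
Qed.

Lemma F1 w p v : D 1 w -> e w u -> D 0 p -> e w p -> D 2 v -> e w v -> v = u.
Proof.
move=> Hw Hwu Hp Hwp Hv Hwv; case: (eqVneq v u) => // Hvu; exfalso.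
have Hvt := vt Hv Hvu. have Hvu' := Hind Hv Hu.
apply: (S115_no (c:=w) (a:=p) (b:=v) (l1:=u) (l2:=t) (l3:=z1) (l4:=z2) (l5:=z3)); solve_fact.
Qed.

Lemma F1n w p v : D 1 w -> e w u -> D 0 p -> e w p -> D 2 v -> v != u -> ~~ e v w.
Proof.
move=> Hw Hwu Hp Hwp Hv Hvu; apply/negP => H; move/eqP: Hvu; apply.
apply: (F1 Hw Hwu Hp Hwp Hv); by rewrite Hsym.
Qed.

Lemma nbr v : D 2 v -> v != u -> exists n, [/\ D 1 n, e n v & ~~ e n u].
Proof.
move=> Hv Hvu; case: (lv_pred Hv) => n [Hn Hnv]; exists n; split => //.
apply/negP => Hnu; case: (lv_pred Hn) => p [Hp Hpn].
move/eqP: Hvu; apply; apply: (F1 Hn Hnu Hp _ Hv Hnv); by rewrite Hsym.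
Qed.

Lemma KD a b c d : a != b -> a != c -> a != d -> b != c -> b != d -> c != d ->
  e a b -> e a c -> e a d -> e b c -> e b d -> False.
Proof.
move=> ? ? ? ? ? ? ? ? ? ? ?; case: (boolP (e c d)) => ?.
  by apply: (K4_no (a:=a) (b:=b) (c:=c) (d:=d)); solve_fact.
by apply: (diamond_no (a:=a) (b:=b) (c:=c) (d:=d)); solve_fact.
Qed.

Section Case12.
Variables (p q w : T).
Hypothesis Hp : D 0 p.
Hypothesis Hq : D 0 q.
Hypothesis Hpq : e p q.
Hypothesis H0 : forall a, D 0 a -> a = p \/ a = q.
Hypothesis Hw : D 1 w.
Hypothesis Hwu : e w u.
Hypothesis Hwp : e w p.
Hypothesis Hwq : ~~ e w q.

Lemma pq_ne : p != q.
Proof. by apply: contraTneq Hpq => ->; rewrite Hirr. Qed.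

Lemma vw v : D 2 v -> v != u -> ~~ e v w.
Proof. exact: F1n Hw Hwu Hp Hwp. Qed.

Lemma nw n v : D 1 n -> e n v -> D 2 v -> v != u -> n != w.
Proof.
move=> Hn Hnv Hv Hvu; apply: contraNneq (vw Hv Hvu) => <-; by rewrite Hsym.
Qed.

Lemma adjpq n : D 1 n -> ~~ e n p -> e n q.
Proof.
move=> Hn Hnp; case: (lv_pred Hn) => a [Ha Han]; rewrite Hsym in Han.
by case: (H0 Ha) => E; subst a => //; rewrite Han in Hnp.
Qed.

Lemma claimG n v v' : D 1 n -> ~~ e n u -> D 2 v -> D 2 v' -> v != u -> v' != u ->
  v != v' -> e n v -> e n v' -> False.
Proof.
move=> Hn Hnu Hv Hv' Hvu Hv'u Hvv' Hnv Hnv'.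
have Hvw := vw Hv Hvu; have Hv'w := vw Hv' Hv'u.
have Hvt := vt Hv Hvu; have Hv't := vt Hv' Hv'u.
have Hvu2 := Hind Hv Hu; have Hv'u2 := Hind Hv' Hu; have Hvv2 := Hind Hv Hv'.
have Hnw := nw Hn Hnv Hv Hvu. have Hpq' := pq_ne.
case: (boolP (e n w)) => Hnw'.
  by apply: (S115_no (c:=n) (a:=v) (b:=v') (l1:=w) (l2:=u) (l3:=t) (l4:=z1) (l5:=z2)); solve_fact.
case: (boolP (e n p)) => Hnp.
  by apply: (S115_no (c:=n) (a:=v) (b:=v') (l1:=p) (l2:=w) (l3:=u) (l4:=t) (l5:=z1)); solve_fact.
have Hnq := adjpq Hn Hnp.
by apply: (S115_no (c:=n) (a:=v) (b:=v') (l1:=q) (l2:=p) (l3:=w) (l4:=u) (l5:=t)); solve_fact.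
Qed.

Lemma TX n : D 1 n -> ~~ e n u -> n != w -> e n p -> ~~ e n q -> e n w.
Proof.
move=> Hn Hnu Hnw Hnp Hnq; case: (boolP (e n w)) => // Hnw'; exfalso.
have Hpq' := pq_ne.
by apply: (S115_no (c:=p) (a:=q) (b:=n) (l1:=w) (l2:=u) (l3:=t) (l4:=z1) (l5:=z2)); solve_fact.
Qed.

Lemma TY n : D 1 n -> ~~ e n u -> e n q -> ~~ e n p -> ~~ e n w.
Proof.
move=> Hn Hnu Hnq Hnp; case: (boolP (e n w)) => // Hnw'; exfalso.
have Hnw : n != w by apply/eqP => E; subst n; exact: (negP Hwq Hnq).
by apply: (S115_no (c:=w) (a:=p) (b:=n) (l1:=u) (l2:=t) (l3:=z1) (l4:=z2) (l5:=z3)); solve_fact.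
Qed.

Lemma P1 n n' : D 1 n -> D 1 n' -> ~~ e n u -> ~~ e n' u -> n != w -> n' != w ->
  n != n' -> e n p -> e n' p -> False.
Proof.
move=> Hn Hn' Hnu Hn'u Hnw Hn'w Hnn Hnp Hn'p.
have Hpq' := pq_ne.
case: (boolP (e n q)) => Hnq; case: (boolP (e n' q)) => Hn'q.
- by apply: (KD (a:=p) (b:=q) (c:=n) (d:=n')); solve_fact.
- have Hn'w' := TX Hn' Hn'u Hn'w Hn'p Hn'q.
  have Hnw' : ~~ e n w.
    by apply/negP => H; apply: (KD (a:=p) (b:=n) (c:=q) (d:=w)); solve_fact.
  have Hnn' : ~~ e n n'.
    by apply/negP => H; apply: (KD (a:=p) (b:=n') (c:=n) (d:=w)); solve_fact.
  by apply: (butterfly_no (a:=n') (b:=w) (c:=n) (d:=q) (m:=p)); solve_fact.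
- have Hnw' := TX Hn Hnu Hnw Hnp Hnq.
  have Hn'w' : ~~ e n' w.
    by apply/negP => H; apply: (KD (a:=p) (b:=n') (c:=q) (d:=w)); solve_fact.
  have Hnn' : ~~ e n' n.
    by apply/negP => H; apply: (KD (a:=p) (b:=n) (c:=n') (d:=w)); solve_fact.
  by apply: (butterfly_no (a:=n) (b:=w) (c:=n') (d:=q) (m:=p)); solve_fact.
- have Hnw' := TX Hn Hnu Hnw Hnp Hnq.
  have Hn'w' := TX Hn' Hn'u Hn'w Hn'p Hn'q.
  by apply: (KD (a:=p) (b:=w) (c:=n) (d:=n')); solve_fact.
Qed.

Lemma P2pair n n' : D 1 n -> D 1 n' -> ~~ e n u -> ~~ e n' u -> n != n' ->
  e n q -> ~~ e n p -> e n' q -> ~~ e n' p -> e n n'.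
Proof.
move=> Hn Hn' Hnu Hn'u Hnn Hnq Hnp Hn'q Hn'p; case: (boolP (e n n')) => // H; exfalso.
have Hpq' := pq_ne.
have Hnw := TY Hn Hnu Hnq Hnp. have Hn'w := TY Hn' Hn'u Hn'q Hn'p.
have Hnw' : n != w by apply/eqP => E; subst n; exact: (negP Hwq Hnq).
have Hn'w' : n' != w by apply/eqP => E; subst n'; exact: (negP Hwq Hn'q).
by apply: (S115_no (c:=q) (a:=n) (b:=n') (l1:=p) (l2:=w) (l3:=u) (l4:=t) (l5:=z1)); solve_fact.
Qed.

Lemma P2 n1 n2 n3 : D 1 n1 -> D 1 n2 -> D 1 n3 -> ~~ e n1 u -> ~~ e n2 u -> ~~ e n3 u ->
  n1 != n2 -> n1 != n3 -> n2 != n3 ->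
  ~~ e n1 p -> ~~ e n2 p -> ~~ e n3 p -> False.
Proof.
move=> H1 H2 H3 H1u H2u H3u H12 H13 H23 H1p H2p H3p.
have H1q := adjpq H1 H1p; have H2q := adjpq H2 H2p; have H3q := adjpq H3 H3p.
have E12 := P2pair H1 H2 H1u H2u H12 H1q H1p H2q H2p.
have E13 := P2pair H1 H3 H1u H3u H13 H1q H1p H3q H3p.
have E23 := P2pair H2 H3 H2u H3u H23 H2q H2p H3q H3p.
by apply: (KD (a:=q) (b:=n1) (c:=n2) (d:=n3)); solve_fact.
Qed.

Lemma case12 v1 v2 v3 v4 : D 2 v1 -> D 2 v2 -> D 2 v3 -> D 2 v4 ->
  v1 != u -> v2 != u -> v3 != u -> v4 != u ->
  v1 != v2 -> v1 != v3 -> v1 != v4 -> v2 != v3 -> v2 != v4 -> v3 != v4 -> False.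
Proof.
move=> Hv1 Hv2 Hv3 Hv4 Hv1u Hv2u Hv3u Hv4u H12 H13 H14 H23 H24 H34.
case: (nbr Hv1 Hv1u) => n1 [Hn1 Hn1v Hn1u].
case: (nbr Hv2 Hv2u) => n2 [Hn2 Hn2v Hn2u].
case: (nbr Hv3 Hv3u) => n3 [Hn3 Hn3v Hn3u].
case: (nbr Hv4 Hv4u) => n4 [Hn4 Hn4v Hn4u].
have Hn1w := nw Hn1 Hn1v Hv1 Hv1u. have Hn2w := nw Hn2 Hn2v Hv2 Hv2u.
have Hn3w := nw Hn3 Hn3v Hv3 Hv3u. have Hn4w := nw Hn4 Hn4v Hv4 Hv4u.
have N12 : n1 != n2.
  by apply/eqP => E; subst n2; apply: (claimG Hn1 Hn1u Hv1 Hv2 Hv1u Hv2u H12 Hn1v Hn2v).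
have N13 : n1 != n3.
  by apply/eqP => E; subst n3; apply: (claimG Hn1 Hn1u Hv1 Hv3 Hv1u Hv3u H13 Hn1v Hn3v).
have N14 : n1 != n4.
  by apply/eqP => E; subst n4; apply: (claimG Hn1 Hn1u Hv1 Hv4 Hv1u Hv4u H14 Hn1v Hn4v).
have N23 : n2 != n3.
  by apply/eqP => E; subst n3; apply: (claimG Hn2 Hn2u Hv2 Hv3 Hv2u Hv3u H23 Hn2v Hn3v).
have N24 : n2 != n4.
  by apply/eqP => E; subst n4; apply: (claimG Hn2 Hn2u Hv2 Hv4 Hv2u Hv4u H24 Hn2v Hn4v).
have N34 : n3 != n4.
  by apply/eqP => E; subst n4; apply: (claimG Hn3 Hn3u Hv3 Hv4 Hv3u Hv4u H34 Hn3v Hn4v).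
case: (boolP (e n1 p)) => H1p.
  have H2p : ~~ e n2 p by apply/negP => H; apply: (P1 Hn1 Hn2 Hn1u Hn2u Hn1w Hn2w N12 H1p H).
  have H3p : ~~ e n3 p by apply/negP => H; apply: (P1 Hn1 Hn3 Hn1u Hn3u Hn1w Hn3w N13 H1p H).
  have H4p : ~~ e n4 p by apply/negP => H; apply: (P1 Hn1 Hn4 Hn1u Hn4u Hn1w Hn4w N14 H1p H).
  exact: (P2 Hn2 Hn3 Hn4 Hn2u Hn3u Hn4u N23 N24 N34 H2p H3p H4p).
case: (boolP (e n2 p)) => H2p.
  have H3p : ~~ e n3 p by apply/negP => H; apply: (P1 Hn2 Hn3 Hn2u Hn3u Hn2w Hn3w N23 H2p H).
  have H4p : ~~ e n4 p by apply/negP => H; apply: (P1 Hn2 Hn4 Hn2u Hn4u Hn2w Hn4w N24 H2p H).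
  exact: (P2 Hn1 Hn3 Hn4 Hn1u Hn3u Hn4u N13 N14 N34 H1p H3p H4p).
case: (boolP (e n3 p)) => H3p.
  have H4p : ~~ e n4 p by apply/negP => H; apply: (P1 Hn3 Hn4 Hn3u Hn4u Hn3w Hn4w N34 H3p H).
  exact: (P2 Hn1 Hn2 Hn4 Hn1u Hn2u Hn4u N12 N14 N24 H1p H2p H4p).
exact: (P2 Hn1 Hn2 Hn3 Hn1u Hn2u Hn3u N12 N13 N23 H1p H2p H3p).
Qed.

End Case12.

Section Case3.
Variables (p q w : T).
Hypothesis Hp : D 0 p.
Hypothesis Hq : D 0 q.
Hypothesis Hpq : e p q.
Hypothesis H0 : forall a, D 0 a -> a = p \/ a = q.
Hypothesis Hw : D 1 w.
Hypothesis Hwu : e w u.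
Hypothesis Hwp : e w p.
Hypothesis Hwq : e w q.

Lemma pq_ne3 : p != q.
Proof. by apply: contraTneq Hpq => ->; rewrite Hirr. Qed.

Lemma vw3 v : D 2 v -> v != u -> ~~ e v w.
Proof. exact: F1n Hw Hwu Hp Hwp. Qed.

Lemma nw3 n v : D 1 n -> e n v -> D 2 v -> v != u -> n != w.
Proof.
move=> Hn Hnv Hv Hvu; apply: contraNneq (vw3 Hv Hvu) => <-; by rewrite Hsym.
Qed.

Lemma c3_nw n : D 1 n -> n != w -> ~~ e n w.
Proof.
move=> Hn Hnw; apply/negP => H; have Hpq' := pq_ne3.
case: (lv_pred Hn) => a [Ha Han]; case: (H0 Ha) => E; subst a.
  by apply: (KD (a:=p) (b:=w) (c:=n) (d:=q)); solve_fact.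
by apply: (KD (a:=q) (b:=w) (c:=n) (d:=p)); solve_fact.
Qed.

Lemma c3_G n v v' pp : D 1 n -> ~~ e n u -> ~~ e n w -> D 0 pp -> e pp n -> e pp w ->
  D 2 v -> D 2 v' -> v != u -> v' != u -> v != v' -> e n v -> e n v' -> False.
Proof.
move=> Hn Hnu Hnw Hpp Hppn Hppw Hv Hv' Hvu Hv'u Hvv' Hnv Hnv'.
have Hvw := vw3 Hv Hvu; have Hv'w := vw3 Hv' Hv'u.
have Hvt := vt Hv Hvu; have Hv't := vt Hv' Hv'u.
have Hvu2 := Hind Hv Hu; have Hv'u2 := Hind Hv' Hu; have Hvv2 := Hind Hv Hv'.
have Hnw' := nw3 Hn Hnv Hv Hvu.
by apply: (S115_no (c:=n) (a:=v) (b:=v') (l1:=pp) (l2:=w) (l3:=u) (l4:=t) (l5:=z1)); solve_fact.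
Qed.

Lemma c3_pair n n' pa pb : D 1 n -> D 1 n' -> ~~ e n u -> ~~ e n' u -> n != w -> n' != w ->
  ~~ e n w -> ~~ e n' w -> n != n' -> D 0 pa -> D 0 pb -> pa != pb -> e pa pb ->
  e pa w -> e pb w -> e pa n -> e pa n' -> False.
Proof.
move=> Hn Hn' Hnu Hn'u Hnw Hn'w Hnw' Hn'w' Hnn Hpa Hpb Hab Hpab Haw Hbw Han Han'.
case: (boolP (e n n')) => Hnn'.
  have Hnb : ~~ e n pb.
    by apply/negP => H; apply: (KD (a:=pa) (b:=pb) (c:=w) (d:=n)); solve_fact.
  have Hn'b : ~~ e n' pb.
    by apply/negP => H; apply: (KD (a:=pa) (b:=pb) (c:=w) (d:=n')); solve_fact.
  by apply: (butterfly_no (a:=n) (b:=n') (c:=w) (d:=pb) (m:=pa)); solve_fact.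
by apply: (S115_no (c:=pa) (a:=n) (b:=n') (l1:=w) (l2:=u) (l3:=t) (l4:=z1) (l5:=z2)); solve_fact.
Qed.

Lemma c3_share n n' pp : D 1 n -> D 1 n' -> ~~ e n u -> ~~ e n' u -> n != w -> n' != w ->
  n != n' -> D 0 pp -> e pp n -> e pp n' -> False.
Proof.
move=> Hn Hn' Hnu Hn'u Hnw Hn'w Hnn Hpp Hpn Hpn'.
have Hnw' := c3_nw Hn Hnw; have Hn'w' := c3_nw Hn' Hn'w.
have Hpq' := pq_ne3.
case: (H0 Hpp) => E; subst pp.
  have Hpw : e p w by rewrite Hsym.
  have Hqw : e q w by rewrite Hsym.
  exact: (c3_pair Hn Hn' Hnu Hn'u Hnw Hn'w Hnw' Hn'w' Hnn Hp Hq Hpq' Hpq Hpw Hqw Hpn Hpn').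
have Hpw : e p w by rewrite Hsym.
have Hqw : e q w by rewrite Hsym.
have Hqp : e q p by rewrite Hsym.
have Hqp' : q != p by rewrite eq_sym.
exact: (c3_pair Hn Hn' Hnu Hn'u Hnw Hn'w Hnw' Hn'w' Hnn Hq Hp Hqp' Hqp Hqw Hpw Hpn Hpn').
Qed.

Lemma case3 v1 v2 v3 : D 2 v1 -> D 2 v2 -> D 2 v3 ->
  v1 != u -> v2 != u -> v3 != u -> v1 != v2 -> v1 != v3 -> v2 != v3 -> False.
Proof.
move=> Hv1 Hv2 Hv3 Hv1u Hv2u Hv3u H12 H13 H23.
case: (nbr Hv1 Hv1u) => n1 [Hn1 Hn1v Hn1u].
case: (nbr Hv2 Hv2u) => n2 [Hn2 Hn2v Hn2u].
case: (nbr Hv3 Hv3u) => n3 [Hn3 Hn3v Hn3u].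
have Hn1w := nw3 Hn1 Hn1v Hv1 Hv1u. have Hn2w := nw3 Hn2 Hn2v Hv2 Hv2u.
have Hn3w := nw3 Hn3 Hn3v Hv3 Hv3u.
have Hn1w' := c3_nw Hn1 Hn1w; have Hn2w' := c3_nw Hn2 Hn2w; have Hn3w' := c3_nw Hn3 Hn3w.
case: (lv_pred Hn1) => p1 [Hp1 Hp1n]. case: (lv_pred Hn2) => p2 [Hp2 Hp2n].
case: (lv_pred Hn3) => p3 [Hp3 Hp3n].
have Hp1w : e p1 w by case: (H0 Hp1) => ->; rewrite Hsym.
have Hp2w : e p2 w by case: (H0 Hp2) => ->; rewrite Hsym.
have Hp3w : e p3 w by case: (H0 Hp3) => ->; rewrite Hsym.
have N12 : n1 != n2.
  by apply/eqP => E; subst n2; apply: (c3_G Hn1 Hn1u Hn1w' Hp1 Hp1n Hp1w Hv1 Hv2 Hv1u Hv2u H12 Hn1v Hn2v).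
have N13 : n1 != n3.
  by apply/eqP => E; subst n3; apply: (c3_G Hn1 Hn1u Hn1w' Hp1 Hp1n Hp1w Hv1 Hv3 Hv1u Hv3u H13 Hn1v Hn3v).
have N23 : n2 != n3.
  by apply/eqP => E; subst n3; apply: (c3_G Hn2 Hn2u Hn2w' Hp2 Hp2n Hp2w Hv2 Hv3 Hv2u Hv3u H23 Hn2v Hn3v).
have S12 : p1 <> p2.
  by move=> E; subst p2; apply: (c3_share Hn1 Hn2 Hn1u Hn2u Hn1w Hn2w N12 Hp1 Hp1n Hp2n).
have S13 : p1 <> p3.
  by move=> E; subst p3; apply: (c3_share Hn1 Hn3 Hn1u Hn3u Hn1w Hn3w N13 Hp1 Hp1n Hp3n).
have S23 : p2 <> p3.
  by move=> E; subst p3; apply: (c3_share Hn2 Hn3 Hn2u Hn3u Hn2w Hn3w N23 Hp2 Hp2n Hp3n).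
by case: (H0 Hp1) => E1; case: (H0 Hp2) => E2; case: (H0 Hp3) => E3; subst;
  [apply: S12 | apply: S12 | apply: S13 | apply: S23 | apply: S23 | apply: S13 | apply: S12 | apply: S12].
Qed.

End Case3.

Lemma final (x y w v1 v2 v3 v4 : T) : D 0 x -> D 0 y -> e x y ->
  (forall a, D 0 a -> a = x \/ a = y) -> D 1 w -> e w u ->
  D 2 v1 -> D 2 v2 -> D 2 v3 -> D 2 v4 ->
  v1 != u -> v2 != u -> v3 != u -> v4 != u ->
  v1 != v2 -> v1 != v3 -> v1 != v4 -> v2 != v3 -> v2 != v4 -> v3 != v4 -> False.
Proof.
move=> Hx Hy Hxy H0 Hw Hwu Hv1 Hv2 Hv3 Hv4 Hv1u Hv2u Hv3u Hv4u H12 H13 H14 H23 H24 H34.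
have H0' : forall a, D 0 a -> a = y \/ a = x by move=> a /H0 [] ->; [right|left].
have Hyx : e y x by rewrite Hsym.
case: (boolP (e w x)) => Hwx; case: (boolP (e w y)) => Hwy.
- exact: (case3 Hx Hy Hxy H0 Hw Hwu Hwx Hwy Hv1 Hv2 Hv3 Hv1u Hv2u Hv3u H12 H13 H23).
- exact: (case12 Hx Hy Hxy H0 Hw Hwu Hwx Hwy Hv1 Hv2 Hv3 Hv4 Hv1u Hv2u Hv3u Hv4u H12 H13 H14 H23 H24 H34).
- exact: (case12 Hy Hx Hyx H0' Hw Hwu Hwy Hwx Hv1 Hv2 Hv3 Hv4 Hv1u Hv2u Hv3u Hv4u H12 H13 H14 H23 H24 H34).
- case: (lv_pred Hw) => a [Ha Haw]; rewrite Hsym in Haw.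
  by case: (H0 _ Ha) => E; subst a; [rewrite Haw in Hwx | rewrite Haw in Hwy].
Qed.

End Main.
Lemma pick4 (T : eqType) (s : seq T) (u : T) : uniq s -> 4 < size s ->
  exists v1 v2 v3 v4, [/\ [&& v1 != u, v2 != u, v3 != u & v4 != u],
     [&& v1 != v2, v1 != v3, v1 != v4, v2 != v3, v2 != v4 & v3 != v4] &
     [/\ v1 \in s, v2 \in s, v3 \in s & v4 \in s]].
Proof.
move=> Hu Hs.
have Hf : 3 < size (filter (predC1 u) s).
  rewrite size_filter.
  have -> : count (predC1 u) s = count (predC (pred1 u)) s by apply: eq_count.
  have := count_predC (pred1 u) s. have := count_uniq_mem u Hu.
  have : (u \in s) <= 1 by case: (u \in s).
  lia.
have Huf := filter_uniq (predC1 u) Hu.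
have Hin : forall z, z \in filter (predC1 u) s -> (z != u) && (z \in s) by move=> z; rewrite mem_filter.
case E: (filter (predC1 u) s) Hf Huf Hin => [|v1 [|v2 [|v3 [|v4 r]]]] //= _ Huf Hin.
exists v1, v2, v3, v4.
have /andP[-> H1] := Hin v1 (mem_head _ _).
have /andP[-> H2] : (v2 != u) && (v2 \in s) by apply: Hin; rewrite !inE eqxx ?orbT.
have /andP[-> H3] : (v3 != u) && (v3 \in s) by apply: Hin; rewrite !inE eqxx ?orbT.
have /andP[-> H4] : (v4 != u) && (v4 \in s) by apply: Hin; rewrite !inE eqxx ?orbT.
split => //.
move: Huf; rewrite !inE !negb_or.
by case/andP => /and4P[-> -> -> _] /andP[/and3P[-> -> _] /andP[/andP[-> _] _]].
Qed.

Theorem lemma22 (T : finType) (e : rel T) (x y r : T) :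
  simple_graph e ->
  H_free e S115 -> H_free e K4 -> H_free e diamond -> H_free e butterfly ->
  e x y -> e r x -> ~~ e r y ->
  let N := fun (i : nat) (z : T) => dist_set e (fun a => (a == x) || (a == y)) z i in
  (* N_2 is an independent set *)
  (forall u v, N 2 u -> N 2 v -> ~~ e u v) ->
  (* |N_2| >= 5 *)
  (exists s : seq T, [/\ uniq s, 5 <= size s & forall z, z \in s -> N 2 z]) ->
  forall u t z1 z2 z3 : T,
    N 2 u ->
    (* t \in T_u: t \in N_3 and the only neighbour of t in N_2 is u *)
    N 3 t -> (forall v, N 2 v -> e t v -> v = u) -> e t u ->
    N 4 z1 -> (N 4 z2 \/ N 5 z2) -> (N 4 z3 \/ N 5 z3 \/ N 6 z3) ->
    ~ induced_path e [:: u; t; z1; z2; z3].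
Proof.
move=> [Hsym Hirr] HS HK HD HB Hxy _ _ N Hind [s [Hus Hs5 Hs]] u t z1 z2 z3
  Hu Ht HtT _ Hz1 Hz2 Hz3 [_ Hp].
rewrite {}/N in Hind Hs Hu Ht HtT Hz1 Hz2 Hz3.
set A := (fun a => (a == x) || (a == y)) in Hind Hs Hu Ht HtT Hz1 Hz2 Hz3.
have F1 : far e A z1 by exists 4.
have F2 : far e A z2 by case: Hz2 => H; [exists 4 | exists 5].
have F3 : far e A z3 by case: Hz3 => [H|[H|H]]; [exists 4 | exists 5 | exists 6].
have E := Hp u.
have Hut : e u t := E 0 1 erefl erefl.
have Htz1 : e t z1 := E 1 2 erefl erefl.
have Hz12 : e z1 z2 := E 2 3 erefl erefl.
have Hz23 : e z2 z3 := E 3 4 erefl erefl.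
have Htz2' : e t z2 = false := E 1 3 erefl erefl.
have Htz3' : e t z3 = false := E 1 4 erefl erefl.
have Hz13' : e z1 z3 = false := E 2 4 erefl erefl.
have Htz2 : ~~ e t z2 by rewrite Htz2'.
have Htz3 : ~~ e t z3 by rewrite Htz3'.
have Hz13 : ~~ e z1 z3 by rewrite Hz13'.
have Hn12 : z1 != z2 by apply: contraTneq Hz12 => ->; rewrite Hirr.
have Hn23 : z2 != z3 by apply: contraTneq Hz23 => ->; rewrite Hirr.
have Hn13 : z1 != z3 by apply: contraTneq Htz1 => ->; rewrite Htz3'.
have Hx : dist_set e A x 0 by apply: lv0; rewrite /A eqxx.
have Hy : dist_set e A y 0 by apply: lv0; rewrite /A eqxx orbT.
have H0 : forall a, dist_set e A a 0 -> a = x \/ a = y.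
  by move=> a /lv0inv; rewrite /A => /orP[/eqP->|/eqP->]; [left|right].
case: (lv_pred Hu) => w [Hw Hwu].
case: (pick4 u Hus Hs5) => v1 [v2 [v3 [v4 [/and4P[Hv1u Hv2u Hv3u Hv4u]
  /and5P[H12 H13 H14 H23 /andP[H24 H34]] [Hv1 Hv2 Hv3 Hv4]]]]].
exact: (final Hsym Hirr HS HK HD HB Hu Ht HtT F1 F2 F3 Hut Htz1 Hz12 Hz23 Htz2 Htz3 Hz13
  Hn12 Hn13 Hn23 Hind Hx Hy Hxy H0 Hw Hwu (Hs _ Hv1) (Hs _ Hv2) (Hs _ Hv3) (Hs _ Hv4)
  Hv1u Hv2u Hv3u Hv4u H12 H13 H14 H23 H24 H34).
Qed.
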